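(* For all integers $L\ge 0$ and $n\ge 0$, $A_{L,0}(n)\ge A_{L,1}(n)$, and the inequality is strict whenever $L\ge 1$ and $n\notin\{0,3,5,6\}$.
   Context: For $i\in\{0,1\}$, $A_{L,i}(n)$ denotes the number of partitions of $n$ into parts congruent to $\pm(1+2i)\pmod 8$ with largest part at most $8L-2i-1$; equivalently $\sum_{n\ge0}A_{L,i}(n)q^n = 1/\big((q^{1+2i};q^8)_L(q^{7-2i};q^8)_L\big)$ with $(a;q)_L=\prod_{j=0}^{L-1}(1-aq^j)$. *)

(* Defs.v *)
From mathcomp Require Import all_boot.
Set Implicit Arguments. Unset Strict Implicit. Unset Printing Implicit Defensive.

Definition allowed_part (L i p : nat) : bool :=
  [&& (p %% 8 == (1 + 2 * i) %% 8) || ((p + (1 + 2 * i)) %% 8 == 0)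
    & p <= 8 * L - 2 * i - 1].

(* A partition of n is encoded by its multiplicity function: m j is the
   multiplicity of the part j.+1 (for j < 8L, which covers all allowed parts;
   each multiplicity is at most n). *)
Definition partitions_A (L i n : nat) :=
  [set m : {ffun 'I_(8 * L) -> 'I_n.+1} |
     [forall j, (0 < m j) ==> allowed_part L i j.+1]
     && (\sum_(j < 8 * L) j.+1 * m j == n)].

Definition A (L i n : nat) : nat := #|partitions_A L i n|.

(* Main.v *)
Require Import Defs.
From mathcomp Require Import all_boot zify.
Set Implicit Arguments. Unset Strict Implicit. Unset Printing Implicit Defensive.

Lemma blk_div k r : r < 8 -> (8*k+r) %/ 8 = k.
Proof. move=> h; lia. Qed.
Lemma blk_mod k r : r < 8 -> (8*k+r) %% 8 = r.
Proof. move=> h; lia. Qed.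

Lemma sum_blocks L (F : nat -> nat) :
  \sum_(i < 8 * L) F i = \sum_(k < L) \sum_(r < 8) F (8 * k + r).
Proof.
elim: L => [|L IH]; first by rewrite muln0 !big_ord0.
have -> : 8 * L.+1 = 8 * L + 8 by rewrite mulnS addnC.
by rewrite big_split_ord /= [RHS]big_ord_recr /= IH.
Qed.

Lemma sum_ind L (a : nat -> nat) X : 0 < L ->
  \sum_(k < L) (a k + ((k:nat) == 0) * X) = \sum_(k < L) a k + X.
Proof.
case: L => // L _; rewrite big_split /=; congr (_ + _).
by rewrite big_ord_recl /= mul1n big1 ?addn0.
Qed.

Lemma sum_lin L (a : nat -> nat) c :
  \sum_(k < L) (8 * k + c) * a k = \sum_(k < L) 8 * k * a k + c * \sum_(k < L) a k.
Proof. rewrite big_distrr -big_split; apply: eq_bigr => k _; by rewrite mulnDl. Qed.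

Section Maps.
Variable L : nat.

Definition Csum (g : nat -> nat) := \sum_(k < L) g (8 * k + 2).
Definition Dsum (g : nat -> nat) := \sum_(k < L) g (8 * k + 4).
Definition caseA g := Dsum g <= Csum g.
Definition Xv g := if caseA g then 2 * (Csum g - Dsum g)
  else if 3 %| (Dsum g - Csum g) then 4 * (Dsum g - Csum g) - 7
  else 4 * (Dsum g - Csum g).
Definition Yv g := if caseA g then 0
  else if 3 %| (Dsum g - Csum g) then 1 else 0.
Definition phib g (k r : nat) :=
  if r == 0 then (if caseA g then g (8 * k + 2) else g (8 * k + 4)) + (k == 0) * Xv g
  else if r == 6 then (if caseA g then g (8 * k + 4) else g (8 * k + 2)) + (k == 0) * Yv g
  else 0.
Definition Phi g j := phib g (j %/ 8) (j %% 8).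

Definition Esum (o : nat -> nat) := \sum_(k < L) o (8 * k).
Definition Fsum (o : nat -> nat) := \sum_(k < L) o (8 * k + 6).
Definition xv o := Esum o - Fsum o.
Definition psib o (k r : nat) :=
  let x := xv o in
  if r == 2 then
    (if 3 %| x then o (8 * k) - (k == 0) * (2 * (x %/ 3))
     else if 5 %| x then o (8 * k + 6) else o (8 * k + 6) - (k == 0))
  else if r == 4 then
    (if 3 %| x then o (8 * k + 6)
     else if 5 %| x then o (8 * k) - (k == 0) * (4 * (x %/ 5))
     else o (8 * k) - (k == 0) * (4 * ((x + 8) %/ 5) - 7))
  else 0.
Definition Psi o j := psib o (j %/ 8) (j %% 8).

Definition supp1 (g : nat -> nat) :=
  forall j, g j != 0 -> j < 8 * L /\ (j %% 8 = 2 \/ j %% 8 = 4).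

Lemma Phi_blk g k r : r < 8 -> Phi g (8 * k + r) = phib g k r.
Proof. by move=> h; rewrite /Phi blk_div // blk_mod. Qed.
Lemma Psi_blk o k r : r < 8 -> Psi o (8 * k + r) = psib o k r.
Proof. by move=> h; rewrite /Psi blk_div // blk_mod. Qed.

Lemma supp1_0 g k r : supp1 g -> r < 8 -> r != 2 -> r != 4 -> g (8 * k + r) = 0.
Proof.
move=> hs hr h2 h4; apply/eqP; apply/negPn/negP => /hs [_].
rewrite blk_mod //; move: h2 h4 => /eqP h2 /eqP h4; lia.
Qed.

Lemma EPhi g : 0 < L -> Esum (Phi g) = (if caseA g then Csum g else Dsum g) + Xv g.
Proof.
move=> hL; rewrite /Esum.
rewrite (eq_bigr (fun k : 'I_L => (if caseA g then g (8 * k + 2) else g (8 * k + 4)) + ((k:nat) == 0) * Xv g)); last first.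
  by move=> k _; have := Phi_blk g k (r:=0); rewrite addn0 => ->.
rewrite (sum_ind (fun k => if caseA g then g (8 * k + 2) else g (8 * k + 4))) //.
by case: (caseA g).
Qed.

Lemma FPhi g : 0 < L -> Fsum (Phi g) = (if caseA g then Dsum g else Csum g) + Yv g.
Proof.
move=> hL; rewrite /Fsum.
rewrite (eq_bigr (fun k : 'I_L => (if caseA g then g (8 * k + 4) else g (8 * k + 2)) + ((k:nat) == 0) * Yv g)); last first.
  by move=> k _; rewrite Phi_blk.
rewrite (sum_ind (fun k => if caseA g then g (8 * k + 4) else g (8 * k + 2))) //.
by case: (caseA g).
Qed.

End Maps.
Section PP.
Variable L : nat.
Lemma Psi_Phi g : 0 < L -> supp1 L g -> forall k r, r < 8 ->
  Psi L (Phi L g) (8 * k + r) = g (8 * k + r).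
Proof.
move=> hL hs k r hr; rewrite Psi_blk // /psib.
have hE := EPhi g hL; have hF := FPhi g hL.
set x := xv L (Phi L g).
have e0 := Phi_blk L g k (r:=0) isT; rewrite addn0 in e0; rewrite e0.
rewrite Phi_blk //.
have Z := supp1_0 k hs.
rewrite /phib /=.
move: hE hF; rewrite /x /xv /Xv /Yv; clear x.
set C := Csum L g; set D := Dsum L g.
case hA: (caseA L g); move: hA; rewrite /caseA -/C -/D => hA.
  move=> hE hF.
  have hx : Esum L (Phi L g) - Fsum L (Phi L g) = 3 * (C - D) by lia.
  rewrite hx dvdn_mulr // mulKn //.
  case: r hr => [|[|[|[|[|[|[|[|r]]]]]]]] //= hr; try by rewrite Z.
    by rewrite addnK.
  by rewrite muln0 addn0.
case: ifP => h3 hE hF.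
  have [j hj] : exists j, D - C = 3 * j by move/dvdnP: h3 => [j ->]; exists j; lia.
  have hx : Esum L (Phi L g) - Fsum L (Phi L g) = 5 * (D - C) - 8 by lia.
  rewrite hx.
  have -> : 3 %| 5 * (D - C) - 8 = false.
    by apply/negP => /dvdnP [q hq]; lia.
  have -> : 5 %| 5 * (D - C) - 8 = false.
    by apply/negP => /dvdnP [q hq]; lia.
  have -> : (5 * (D - C) - 8 + 8) %/ 5 = D - C by lia.
  case: r hr => [|[|[|[|[|[|[|[|r]]]]]]]] //= hr; try by rewrite Z.
    by rewrite muln1 addnK.
  by rewrite addnK.
have hx : Esum L (Phi L g) - Fsum L (Phi L g) = 5 * (D - C) by lia.
rewrite hx.
have -> : 3 %| 5 * (D - C) = false.
  apply/negP => /dvdnP [q hq]; move/negP: h3; apply; apply/dvdnP.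
  exists (2 * (D - C) - q); lia.
rewrite dvdn_mulr // mulKn //.
case: r hr => [|[|[|[|[|[|[|[|r]]]]]]]] //= hr; try by rewrite Z.
  by rewrite muln0 addn0.
by rewrite addnK.
Qed.
End PP.
Section PS.
Variable L : nat.
Lemma blk_Phi g k : \sum_(r < 8) (8 * k + r).+1 * Phi L g (8 * k + r) =
  (8 * k + 1) * phib L g k 0 + (8 * k + 7) * phib L g k 6.
Proof.
rewrite !big_ord_recl big_ord0 /= !Phi_blk // /bump /=.
have -> : phib L g k 1 = 0 by [].
have -> : phib L g k 2 = 0 by [].
have -> : phib L g k 3 = 0 by [].
have -> : phib L g k 4 = 0 by [].
have -> : phib L g k 5 = 0 by [].
have -> : phib L g k 7 = 0 by [].
rewrite ?muln0 ?addn0 ?add0n (_ : 1 + (1 + (1 + (1 + (1 + 1)))) = 6) //; congr (_ * _ + _ * _); lia.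
Qed.

Lemma blk_g g k : supp1 L g -> \sum_(r < 8) (8 * k + r).+1 * g (8 * k + r) =
  (8 * k + 3) * g (8 * k + 2) + (8 * k + 5) * g (8 * k + 4).
Proof.
move=> hs; have Z := supp1_0 k hs.
rewrite (eq_bigr (fun r : 'I_8 => if (r:nat) == 2 then (8 * k + 3) * g (8 * k + 2)
   else if (r:nat) == 4 then (8 * k + 5) * g (8 * k + 4) else 0)); last first.
  move=> [r hr] _ /=.
  case: eqP => [->|h2]; first by congr (_ * _); lia.
  case: eqP => [->|h4]; first by congr (_ * _); lia.
  by rewrite Z ?muln0 //; apply/eqP.
by rewrite !big_ord_recl big_ord0 /= /bump /= !add0n addn0.
Qed.

Lemma sum_ind2 (a b : nat -> nat) X Y : 0 < L ->
  \sum_(k < L) ((8 * k + 1) * (a k + ((k:nat) == 0) * X) + (8 * k + 7) * (b k + ((k:nat) == 0) * Y)) =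
  \sum_(k < L) 8 * k * a k + \sum_(k < L) a k + (\sum_(k < L) 8 * k * b k + 7 * \sum_(k < L) b k) + (X + 7 * Y).
Proof.
move=> hL.
rewrite (eq_bigr (fun k : 'I_L => ((8 * k + 1) * a k + (8 * k + 7) * b k) + ((k:nat) == 0) * (X + 7 * Y))); last first.
  move=> k _; case: eqP => [->|_] /=; lia.
rewrite (sum_ind (fun k => (8 * k + 1) * a k + (8 * k + 7) * b k)) //.
by rewrite big_split /= (@sum_lin L a 1) (@sum_lin L b 7) mul1n.
Qed.

Lemma Phi_sum g : 0 < L -> supp1 L g ->
  \sum_(i < 8 * L) i.+1 * Phi L g i = \sum_(i < 8 * L) i.+1 * g i.
Proof.
move=> hL hs.
rewrite (sum_blocks L (fun i => i.+1 * Phi L g i)) (sum_blocks L (fun i => i.+1 * g i)).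
under eq_bigr => k _ do rewrite blk_Phi.
under [RHS]eq_bigr => k _ do rewrite (blk_g k hs).
rewrite [RHS]big_split /= (@sum_lin L (fun k => g (8 * k + 2)) 3) (@sum_lin L (fun k => g (8 * k + 4)) 5).
rewrite /phib /=.
have hX := erefl (Xv L g); have hY := erefl (Yv L g).
rewrite {2}/Xv {2}/Yv in hX hY.
case hA: (caseA L g); rewrite hA in hX hY.
  have := @sum_ind2 (fun k => g (8 * k + 2)) (fun k => g (8 * k + 4)) (Xv L g) (Yv L g) hL.
  rewrite /= => ->.
  move: hA hX hY; rewrite /caseA /Csum /Dsum.
  set C := \sum_(k < L) g (8 * k + 2); set D := \sum_(k < L) g (8 * k + 4).
  lia.
have := @sum_ind2 (fun k => g (8 * k + 4)) (fun k => g (8 * k + 2)) (Xv L g) (Yv L g) hL.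
rewrite /= => ->.
move: hA hX hY; rewrite /caseA /Csum /Dsum.
set C := \sum_(k < L) g (8 * k + 2); set D := \sum_(k < L) g (8 * k + 4).
case: ifP => [/dvdnP [q hq]|_]; lia.
Qed.
End PS.

Definition goodx x := (3 %| x) || (5 %| x) || (x %% 15 == 7).

Lemma Phi_good L g : 0 < L ->
  (Fsum L (Phi L g) <= Esum L (Phi L g)) && goodx (xv L (Phi L g)).
Proof.
move=> hL; rewrite /xv EPhi // FPhi // /Xv /Yv /goodx.
case hA: (caseA L g); move: hA; rewrite /caseA => hA.
  have -> : 3 %| Csum L g + 2 * (Csum L g - Dsum L g) - (Dsum L g + 0).
    by apply/dvdnP; exists (Csum L g - Dsum L g); lia.
  rewrite orTb andbT; lia.
case: ifP => h3.
  move/dvdnP: h3 => [q hq].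
  have -> : (Dsum L g + (4 * (Dsum L g - Csum L g) - 7) - (Csum L g + 1)) %% 15 = 7 by lia.
  rewrite eqxx !orbT andbT; lia.
have -> : 5 %| Dsum L g + 4 * (Dsum L g - Csum L g) - (Csum L g + 0).
  by apply/dvdnP; exists (Dsum L g - Csum L g); lia.
rewrite orbT orTb andbT; lia.
Qed.

Lemma Psi_Phi_all L g : 0 < L -> supp1 L g -> forall j, Psi L (Phi L g) j = g j.
Proof.
move=> hL hs j; have -> : j = 8 * (j %/ 8) + j %% 8 by lia.
by apply: Psi_Phi => //; rewrite ltn_mod.
Qed.

Lemma Psi_ext L o1 o2 : (forall j, j < 8 * L -> o1 j = o2 j) ->
  forall j, j < 8 * L -> Psi L o1 j = Psi L o2 j.
Proof.
move=> h j hj.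
have hx : xv L o1 = xv L o2.
  rewrite /xv /Esum /Fsum; congr (_ - _); apply: eq_bigr => k _; apply: h.
  - by have := ltn_ord k; lia.
  - by have := ltn_ord k; lia.
rewrite /Psi /psib hx (h (8 * (j %/ 8))); last by lia.
by rewrite (h (8 * (j %/ 8) + 6)); last by lia.
Qed.

Definition get N n (m : {ffun 'I_N -> 'I_n.+1}) (j : nat) : nat :=
  \sum_(i < N | (i : nat) == j) (m i : nat).

Lemma get_ord N n (m : {ffun 'I_N -> 'I_n.+1}) (i : 'I_N) : get m i = m i.
Proof. by rewrite /get (big_pred1 i). Qed.

Lemma get_out N n (m : {ffun 'I_N -> 'I_n.+1}) j : N <= j -> get m j = 0.
Proof.
move=> hj; rewrite /get big_pred0 // => i; apply/negbTE.
by have := ltn_ord i; apply: contraTneq => ->; rewrite ltnNge hj.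
Qed.

Lemma mem_part L i n (m : {ffun 'I_(8 * L) -> 'I_n.+1}) :
  (m \in partitions_A L i n) =
  [forall j, (0 < m j) ==> allowed_part L i j.+1] &&
  (\sum_(j < 8 * L) j.+1 * get m j == n).
Proof.
rewrite inE; congr (_ && (_ == n)); apply: eq_bigr => j _; by rewrite get_ord.
Qed.

Lemma supp_type1 L n (m : {ffun 'I_(8 * L) -> 'I_n.+1}) :
  m \in partitions_A L 1 n -> supp1 L (get m).
Proof.
rewrite mem_part => /andP [/forallP h _] j hj.
have hjL : j < 8 * L by rewrite ltnNge; apply: contra hj => /get_out ->.
split=> //.
move: hj; rewrite -[j]/(nat_of_ord (Ordinal hjL)) get_ord => hj.
have := h (Ordinal hjL); rewrite lt0n hj /= /allowed_part.
case/andP => /orP [/eqP e|/eqP e] _ /=; lia.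
Qed.

Definition phi L n (m : {ffun 'I_(8 * L) -> 'I_n.+1}) : {ffun 'I_(8 * L) -> 'I_n.+1} :=
  [ffun i : 'I_(8 * L) => inord (Phi L (get m) i)].

Section F.
Variables L n : nat.
Hypothesis hL : 0 < L.

Lemma Phi_sum_n (m : {ffun 'I_(8 * L) -> 'I_n.+1}) : m \in partitions_A L 1 n ->
  \sum_(j < 8 * L) j.+1 * Phi L (get m) j = n.
Proof.
move=> hm; have hs := supp_type1 hm.
move: hm; rewrite mem_part => /andP [_ /eqP e]; by rewrite Phi_sum.
Qed.

Lemma Phi_bound (m : {ffun 'I_(8 * L) -> 'I_n.+1}) (i : 'I_(8 * L)) :
  m \in partitions_A L 1 n -> Phi L (get m) i <= n.
Proof.
move=> hm; apply: leq_trans (eq_leq (Phi_sum_n hm)); rewrite (bigD1 i) //=.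
apply: leq_trans (leq_addr _ _); exact: leq_pmull.
Qed.

Lemma get_phi (m : {ffun 'I_(8 * L) -> 'I_n.+1}) j : m \in partitions_A L 1 n ->
  j < 8 * L -> get (phi m) j = Phi L (get m) j.
Proof.
move=> hm hj; rewrite -[j]/(nat_of_ord (Ordinal hj)) get_ord ffunE inordK //.
by rewrite ltnS Phi_bound.
Qed.

Lemma phi_inj : {in partitions_A L 1 n &, injective (@phi L n)}.
Proof.
move=> m1 m2 h1 h2 e; apply/ffunP => i; apply/val_inj => /=.
rewrite -!get_ord -(Psi_Phi_all hL (supp_type1 h1)) -(Psi_Phi_all hL (supp_type1 h2)).
apply: Psi_ext => // j hj.
by rewrite -!get_phi // e.
Qed.

Lemma phi_mem (m : {ffun 'I_(8 * L) -> 'I_n.+1}) : m \in partitions_A L 1 n ->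
  phi m \in partitions_A L 0 n.
Proof.
move=> hm; rewrite mem_part; apply/andP; split.
  apply/forallP => i; apply/implyP.
  rewrite ffunE inordK ?ltnS ?Phi_bound //.
  rewrite /Phi /phib; have := ltn_ord i => hi.
  case: ifP => [/eqP h0 _|_]; first by rewrite /allowed_part; apply/andP; split; [apply/orP; left; apply/eqP|]; lia.
  case: ifP => [/eqP h6 _|_ //]; rewrite /allowed_part; apply/andP; split; [apply/orP; right; apply/eqP|]; lia.
apply/eqP; transitivity (\sum_(j < 8 * L) j.+1 * Phi L (get m) j); last exact: Phi_sum_n hm.
apply: eq_bigr => i _; by rewrite get_phi.
Qed.

Lemma phi_good (m : {ffun 'I_(8 * L) -> 'I_n.+1}) : m \in partitions_A L 1 n ->
  (Fsum L (get (phi m)) <= Esum L (get (phi m))) && goodx (xv L (get (phi m))).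
Proof.
move=> hm.
have eE : Esum L (get (phi m)) = Esum L (Phi L (get m)).
  apply: eq_bigr => k _; rewrite get_phi //; have := ltn_ord k; lia.
have eF : Fsum L (get (phi m)) = Fsum L (Phi L (get m)).
  apply: eq_bigr => k _; rewrite get_phi //; have := ltn_ord k; lia.
by rewrite /xv eE eF; apply: Phi_good.
Qed.
End F.

Lemma exists_f n : n \notin [:: 0; 3; 5; 6] ->
  exists f, (7 * f <= n) && ((n - 7 * f < f) || ~~ goodx (n - 7 * f - f)).
Proof.
move=> hn; case: (leqP 112 n) => hb.
  exists ((2 * (n - 1)) %% 15).
  have h1 : (n - 7 * ((2 * (n - 1)) %% 15) - (2 * (n - 1)) %% 15) %% 15 = 1 by lia.
  apply/andP; split; first lia.
  apply/orP; right; rewrite /goodx; apply/negP => /orP [/orP [/dvdnP [q hq]|/dvdnP [q hq]]|/eqP h]; lia.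
have hc : all (fun n => (n \in [:: 0; 3; 5; 6]) || has (fun f => (7 * f <= n) && ((n - 7 * f < f) || ~~ goodx (n - 7 * f - f))) (iota 0 15)) (iota 0 112).
  by vm_compute.
have hin : n \in iota 0 112 by rewrite mem_iota.
have := allP hc n hin; rewrite (negbTE hn) orFb => /hasP [f _ hf]; by exists f.
Qed.

Lemma sum_single N j c : j < N ->
  \sum_(i < N) i.+1 * (((i : nat) == j) * c) = j.+1 * c.
Proof.
move=> hj; rewrite (bigD1 (Ordinal hj)) //= eqxx mul1n big1 ?addn0 // => i hi.
have : (i : nat) != j := hi.
by move/negbTE => ->; rewrite mul0n muln0.
Qed.

Definition o0 L n e f : {ffun 'I_(8 * L) -> 'I_n.+1} :=
  [ffun i : 'I_(8 * L) => inord (((i : nat) == 0) * e + ((i : nat) == 6) * f)].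

Section O.
Variables L n e f : nat.
Hypothesis hL : 0 < L.
Hypothesis hef : e + 7 * f = n.

Lemma get_o0 j : j < 8 * L -> get (o0 L n e f) j = (j == 0) * e + (j == 6) * f.
Proof.
move=> hj; rewrite -[j]/(nat_of_ord (Ordinal hj)) get_ord ffunE inordK //=.
by rewrite ltnS; case: eqP; case: eqP => //=; lia.
Qed.

Lemma o0_mem : o0 L n e f \in partitions_A L 0 n.
Proof.
rewrite mem_part; apply/andP; split.
  apply/forallP => i; apply/implyP; rewrite -get_ord get_o0 //.
  have hi := ltn_ord i.
  case: eqP => [h0 _|_]; first by rewrite h0 /allowed_part; apply/andP; split => //=; lia.
  case: eqP => [h6 _|_] //; rewrite h6 /allowed_part; apply/andP; split => //=; lia.
rewrite (eq_bigr (fun i : 'I_(8 * L) => i.+1 * (((i : nat) == 0) * e) + i.+1 * (((i : nat) == 6) * f))); last first.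
  by move=> i _; rewrite get_o0 // mulnDr.
rewrite big_split /= !sum_single //; lia.
Qed.

Lemma o0_bad : (f <= e) && goodx (e - f) = false ->
  (Fsum L (get (o0 L n e f)) <= Esum L (get (o0 L n e f))) &&
   goodx (xv L (get (o0 L n e f))) = false.
Proof.
have eE : Esum L (get (o0 L n e f)) = e.
  have := @sum_ind L (fun _ => 0) e hL; rewrite /= (_ : \sum_(k < L) 0 = 0) ?add0n => [H|]; last by rewrite big1.
  rewrite -[RHS]H; apply: eq_bigr.
  move=> k _; have := ltn_ord k => hk; rewrite get_o0; last lia.
  by do 3 (case: eqP => ? /=); lia.
have eF : Fsum L (get (o0 L n e f)) = f.
  have := @sum_ind L (fun _ => 0) f hL; rewrite /= (_ : \sum_(k < L) 0 = 0) ?add0n => [H2|]; last by rewrite big1.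
  rewrite -[RHS]H2; apply: eq_bigr.
  move=> k _; have := ltn_ord k => hk; rewrite get_o0; last lia.
  by do 3 (case: eqP => ? /=); lia.
by rewrite /xv eE eF.
Qed.
End O.

Theorem theorem2 : forall L n : nat,
  A L 1 n <= A L 0 n /\
  (1 <= L -> n \notin [:: 0; 3; 5; 6] -> A L 1 n < A L 0 n).
Proof.
move=> [|L'] n.
  split=> //; rewrite /A; apply: subset_leq_card; apply/subsetP => m.
  by rewrite !inE => /andP [_ ->]; rewrite andbT; apply/forallP => -[].
set L := L'.+1; have hL : 0 < L by [].
have hsub : [set phi x | x in partitions_A L 1 n] \subset partitions_A L 0 n.
  by apply/subsetP => o /imsetP [m hm ->]; apply: phi_mem.
have hcard : A L 1 n = #|[set phi x | x in partitions_A L 1 n]|.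
  by rewrite /A card_in_imset //; apply: phi_inj.
split; first by rewrite hcard; apply: subset_leq_card.
move=> _ hn; have [f /andP [h7 hf]] := exists_f hn.
set e := n - 7 * f.
have hef : e + 7 * f = n by rewrite /e subnK.
have hbad : (f <= e) && goodx (e - f) = false.
  by move: hf; rewrite -/e; case: leqP => //= _ /negbTE.
have hsub2 : [set phi x | x in partitions_A L 1 n] \subset partitions_A L 0 n :\ o0 L n e f.
  apply/subsetP => o /imsetP [m hm ->]; rewrite in_setD1 phi_mem // andbT.
  apply/eqP => heq; have := phi_good hL hm; rewrite heq o0_bad //.
have h1 := subset_leq_card hsub2.
have h2 := cardsD1 (o0 L n e f) (partitions_A L 0 n).
rewrite (o0_mem hL hef) in h2.
rewrite hcard /A; lia.
Qed.
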